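(* Let $r\ge3$ and $n\ge1$ be integers and put $q_k=\frac{1+r^k(r-2)}{r-1}$ for $k\in\mathbb Z_{\ge0}$. If $B\subseteq\mathbb Z_{q_n}^n$ is an independent set in $C_{q_{n-1},q_n}^{\boxtimes n}$ with $|B|=q_n$, then for every coordinate $i\in\{1,\dots,n\}$ and every symbol $s\in\mathbb Z_{q_n}$ there is exactly one $b\in B$ with $b_i=s$.
   Context: For positive integers $q,d$ with $q\ge 2d$, the circular graph $C_{d,q}$ has vertex set $\mathbb Z_q$, two distinct vertices $x,y$ being adjacent iff $\min\{|x-y|,q-|x-y|\}<d$ (viewing $x,y$ as integers in $\{0,\dots,q-1\}$). For a graph $G=(V,E)$, $G^{\boxtimes n}$ has vertex set $V^n$, distinct $(u_i)$, $(v_i)$ adjacent iff for every $i$ either $u_i=v_i$ or $u_iv_i\in E$. An independent set is a set of pairwise non-adjacent vertices. *)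

(* Defs.v *)
From mathcomp Require Import all_boot.
Set Implicit Arguments. Unset Strict Implicit. Unset Printing Implicit Defensive.

(* q_k = (1 + r^k (r-2)) / (r-1); the division is exact since r^k = 1 mod r-1. *)
Definition qseq (r k : nat) : nat := (1 + r ^ k * (r - 2)) %/ (r - 1).

Definition cdist (q : nat) (x y : 'I_q) : nat :=
  let a := maxn x y - minn x y in minn a (q - a).

Definition circ_adj (d q : nat) (x y : 'I_q) : bool :=
  (x != y) && (cdist x y < d).

Definition strong_adj (V : finType) (adj : rel V) (n : nat)
    (u v : {ffun 'I_n -> V}) : bool :=
  (u != v) && [forall i, (u i == v i) || adj (u i) (v i)].

Definition independent (T : finType) (adj : rel T) (B : {set T}) : Prop :=
  forall u v, u \in B -> v \in B -> ~~ adj u v.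

(* Main.v *)
Require Import Defs.
From mathcomp Require Import all_boot zify.
Set Implicit Arguments. Unset Strict Implicit.

Fixpoint Q (r k : nat) : nat := if k is k'.+1 then r * Q r k' - 1 else 1.

Lemma Q_ge1 r k : 2 <= r -> 1 <= Q r k.
Proof. move=> hr; elim: k => [|k IH] //=; nia. Qed.

Lemma Q_eq r k : 3 <= r -> (r - 1) * Q r k = 1 + r ^ k * (r - 2).
Proof.
move=> hr; elim: k => [|k IH] /=; first by rewrite expn0; lia.
have h1 := @Q_ge1 r k (ltnW hr).
rewrite expnS. move: IH; set P := r ^ k; set x := Q r k => IH. nia.
Qed.

Lemma qseqE r k : 3 <= r -> qseq r k = Q r k.
Proof.
move=> hr; rewrite /qseq -Q_eq // mulKn //; lia.
Qed.

Lemma Q_mono r k m : 2 <= r -> k <= m -> Q r k <= Q r m.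
Proof.
move=> hr; elim: m => [|m IH]; first by rewrite leqn0 => /eqP ->.
rewrite leq_eqVlt => /orP [/eqP -> //| hk].
apply: leq_trans (IH hk) _ => /=. have := @Q_ge1 r m hr. nia.
Qed.

Definition inarc (q d t x : nat) : bool := [exists j : 'I_d, x == (t + j) %% q].

Lemma modform q t j : t < q -> j < q ->
  (t + j) %% q = if t + j < q then t + j else t + j - q.
Proof.
move=> ht hj; case: ifP => h; first by rewrite modn_small.
have -> : t + j = (t + j - q) + q by lia.
rewrite modnDr modn_small; lia.
Qed.

Lemma arc_close q d t (u v : 'I_q) : d <= q -> inarc q d t u -> inarc q d t v ->
  cdist u v < d.
Proof.
move=> hdq /existsP [j1 /eqP h1] /existsP [j2 /eqP h2].
have q0 : 0 < q by case: (ltn_ord u) => // ; lia.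
rewrite -modnDml in h1; rewrite -modnDml in h2.
have ht : t %% q < q by rewrite ltn_mod.
have hj1 : j1 < q by apply: leq_trans (ltn_ord j1) hdq.
have hj2 : j2 < q by apply: leq_trans (ltn_ord j2) hdq.
have hd1 := ltn_ord j1; have hd2 := ltn_ord j2.
rewrite (modform ht hj1) in h1; rewrite (modform ht hj2) in h2.
rewrite /cdist.
move: h1 h2; set T := t %% q; set a := nat_of_ord j1; set b := nat_of_ord j2.
set x := nat_of_ord u; set y := nat_of_ord v.
have hx := ltn_ord u; have hy := ltn_ord v.
case: ifP; case: ifP => ? ? -> ->; lia.
Qed.

Lemma card_sumb (T : finType) (B : {set T}) (P : pred T) :
  #|[set b in B | P b]| = \sum_(b in B) (P b : nat).
Proof.
rewrite -sum1_card big_mkcond [RHS]big_mkcond; apply: eq_bigr => b _.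
by rewrite !inE; case: (b \in B); case: (P b).
Qed.

Lemma sum_shift q (h : nat -> nat) : (forall t, h (t + q) = h t) ->
  \sum_(t < q) h (t + 1) = \sum_(t < q) h t.
Proof.
case: q h => [|q] h hp; first by rewrite !big_ord0.
rewrite big_ord_recr big_ord_recl /=.
have -> : q + 1 = 0 + q.+1 by lia.
rewrite hp [RHS]addnC; congr (_ + _); apply: eq_bigr => i _.
by rewrite /bump /= add1n addn1.
Qed.

Lemma shift_any q (h : nat -> nat) j : (forall t, h (t + q) = h t) ->
  \sum_(t < q) h (t + j) = \sum_(t < q) h t.
Proof.
move=> hp; elim: j => [|j IH]; first by apply: eq_bigr => t _; rewrite addn0.
rewrite -IH -(sum_shift (h := fun t => h (t + j))).
  by apply: eq_bigr => t _; congr h; lia.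
by move=> t; rewrite /= -(hp (t + j)); congr h; lia.
Qed.

Lemma one_hit q x j : x < q -> \sum_(t < q) (x == (t + j) %% q : nat) = 1.
Proof.
move=> hx.
rewrite (shift_any (h := fun t => (x == t %% q : nat))); last first.
  by move=> t; rewrite modnDr.
rewrite (bigD1 (Ordinal hx)) //= modn_small // eqxx big1 // => t ht.
rewrite modn_small //; case: eqP => // ht'; move: ht; rewrite -val_eqE /= ht' eqxx //.
Qed.

Lemma inarc_sum q d t x : d <= q ->
  (inarc q d t x : nat) = \sum_(j < d) (x == (t + j) %% q : nat).
Proof.
move=> hdq; case: (boolP (inarc q d t x)) => [/existsP [j0 /eqP hj0]|].
  rewrite (bigD1 j0) //= hj0 eqxx big1 // => j hj.
  case: eqP => // h; move: hj; rewrite -val_eqE /=.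
  have : (t + j0 == t + j %[mod q]) by apply/eqP.
  rewrite eqn_modDl !modn_small //; try apply: leq_trans (ltn_ord _) hdq.
  by move=> /eqP ->; rewrite eqxx.
move=> /existsPn hn; rewrite big1 // => j _; by rewrite (negbTE (hn j)).
Qed.

Lemma double_count q d n (B : {set {ffun 'I_n -> 'I_q}}) (i : 'I_n) : d <= q ->
  \sum_(t < q) #|[set b in B | inarc q d t (b i)]| = d * #|B|.
Proof.
move=> hdq.
under eq_bigr => t _ do rewrite card_sumb.
rewrite exchange_big /= -sum1_card big_distrr /=; apply: eq_bigr => b _.
under eq_bigr => t _ do rewrite inarc_sum //.
rewrite exchange_big /= muln1.
under eq_bigr => j _ do rewrite one_hit //.
by rewrite sum_nat_const card_ord muln1.
Qed.

Definition hypJ q d n (J : {set 'I_n}) (B : {set {ffun 'I_n -> 'I_q}}) :=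
  forall u v, u \in B -> v \in B -> u != v ->
    exists2 j, j \in J & d <= cdist (u j) (v j).
Arguments hypJ q d {n}.

Lemma stepJ q d n (J : {set 'I_n}) B i t : d <= q -> hypJ q d J B -> i \in J ->
  hypJ q d (J :\ i) [set b in B | inarc q d t (b i)].
Proof.
move=> hdq hB hi u v; rewrite !inE => /andP [uB ua] /andP [vB va] uv.
have [j jJ hj] := hB u v uB vB uv.
exists j => //; rewrite !inE jJ andbT.
apply/eqP => eji; subst j.
have := arc_close hdq ua va; lia.
Qed.

Fixpoint Abound q d k := if k is k'.+1 then q * Abound q d k' %/ d else 1.

Lemma Gbound q d n : 0 < d -> d <= q -> forall k (J : {set 'I_n}) B,
  #|J| = k -> hypJ q d J B -> #|B| <= Abound q d k.
Proof.
move=> d0 hdq; elim=> [|k IH] J B hJ hB /=.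
  rewrite leqNgt; apply/negP => /card_gt1P [u [v [uB vB uv]]].
  have [j jJ _] := hB u v uB vB uv.
  by move: hJ => /eqP; rewrite cards_eq0 => /eqP h; rewrite h inE in jJ.
have : 0 < #|J| by rewrite hJ.
move=> /card_gt0P [i hi].
rewrite leq_divRL // mulnC -(double_count B i hdq).
apply: leq_trans (_ : \sum_(t < q) Abound q d k <= _).
  apply: leq_sum => t _.
  apply: (IH (J :\ i)); last exact: stepJ.
  by move: hJ; rewrite (cardsD1 i J) hi /=; lia.
by rewrite sum_nat_const card_ord.
Qed.

Theorem proposition9p5 (r n : nat) (hr : 3 <= r) (hn : 1 <= n)
    (B : {set {ffun 'I_n -> 'I_(qseq r n)}}) :
  independent (strong_adj (@circ_adj (qseq r n.-1) (qseq r n)) (n:=n)) B ->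
  #|B| = qseq r n ->
  forall (i : 'I_n) (s : 'I_(qseq r n)), #|[set b in B | b i == s]| = 1.
Proof.
move=> hind hcard i s.
have hn' : n = n.-1.+1 by lia.
set q := qseq r n in B hind hcard s *.
set d := qseq r n.-1 in hind *.
have qE : q = r * d - 1 by rewrite /q /d !qseqE // hn'.
have r2 : 2 <= r by lia.
have d1 : 1 <= d by rewrite /d qseqE //; apply: Q_ge1.
have hdq : d <= q by rewrite qE; nia.
have q0 : 0 < q by lia.
have Aq : forall k, k <= n.-1 -> Abound q d k = Q r k.
  elim=> [|k IH] hk //=.
  rewrite IH; last lia.
  have hQ1 := @Q_ge1 r k r2.
  have hQd : Q r k <= d by rewrite /d qseqE //; apply: Q_mono => //; lia.
  move: hQ1 hQd; set x := Q r k => hQ1 hQd.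
  apply/eqP; rewrite eqn_leq; apply/andP; split.
    rewrite -ltnS ltn_divLR //; rewrite qE; nia.
  rewrite leq_divRL //; rewrite qE; nia.
have hJ : hypJ q d [set: 'I_n] B.
  move=> u v uB vB uv; have := hind u v uB vB.
  rewrite /strong_adj uv /= => /forallPn [j]; rewrite negb_or /circ_adj.
  move=> /andP [hne]; rewrite hne /= -leqNgt => hj.
  by exists j; rewrite ?inE.
pose N t := #|[set b in B | inarc q d t (b i)]|.
have Nle : forall t, N t <= d.
  move=> t; have dQ : d = Q r n.-1 by rewrite /d qseqE.
  rewrite [X in _ <= X]dQ -(Aq n.-1) //.
  apply: (Gbound d1 hdq (J := [set: 'I_n] :\ i)); last exact: stepJ.
  move: (cardsD1 i [set: 'I_n]); rewrite inE cardsT card_ord add1n => h; by rewrite [in RHS]h.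
have Nsum : \sum_(t < q) N t = \sum_(t < q) d.
  by rewrite /N double_count // hcard sum_nat_const card_ord mulnC.
have Neq_ord : forall t : 'I_q, N t = d.
  move=> t0; apply/eqP; rewrite eqn_leq Nle /= leqNgt; apply/negP => hlt.
  have : \sum_(t < q) N t < \sum_(t < q) d.
    rewrite (bigD1 t0) //= [X in _ < X](bigD1 t0) //=.
    by rewrite -addSn leq_add // leq_sum.
  by rewrite Nsum ltnn.
have Nmod : forall t, N t = N (t %% q).
  move=> t; rewrite /N; apply: eq_card => b; rewrite !inE /inarc.
  congr (_ && _); apply: eq_existsb => j; by rewrite modnDml.
have Neq : forall t, N t = d.
  by move=> t; rewrite Nmod (Neq_ord (Ordinal (ltn_pmod t q0))).
pose f u := #|[set b in B | val (b i) == u %% q]|.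
have Nf : forall t, N t = \sum_(j < d) f (t + j).
  move=> t; rewrite /N card_sumb.
  under eq_bigr => b _ do rewrite inarc_sum //.
  rewrite exchange_big /=; apply: eq_bigr => j _.
  by rewrite /f card_sumb.
have fd : forall t, f (t + d) = f t.
  move=> t; have h1 := Neq (t + 1); have h2 := Neq t; rewrite !Nf in h1 h2.
  have e1 := @big_ord_recl nat 0 addn d (fun j => f (t + j)).
  have e2 := @big_ord_recr nat 0 addn d (fun j => f (t + j)).
  rewrite /= in e1 e2.
  have e3 : \sum_(j < d) f (t + lift ord0 j) = \sum_(j < d) f (t + 1 + j).
    by apply: eq_bigr => j _; congr f; rewrite lift0; lia.
  rewrite e3 in e1; rewrite addn0 h1 in e1; rewrite h2 e1 in e2; lia.
have fq : forall t, f (t + q) = f t.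
  by move=> t; rewrite /f; apply: eq_card => b; rewrite !inE modnDr.
have fkd : forall k t, f (t + k * d) = f t.
  elim=> [|k IH] t; first by rewrite mul0n addn0.
  by rewrite mulSnr addnA fd IH.
have f1 : forall t, f t.+1 = f t.
  move=> t; rewrite -(fkd r t).
  have -> : t + r * d = t.+1 + q by rewrite qE; nia.
  by rewrite fq.
have fc : forall t, f t = f 0.
  by elim=> [|t IH] //; rewrite f1.
have fsum : \sum_(u < q) f u = #|B|.
  rewrite /f; under eq_bigr => u _ do rewrite card_sumb.
  rewrite exchange_big /= -sum1_card; apply: eq_bigr => b _.
  rewrite -(one_hit 0 (ltn_ord (b i))).
  by apply: eq_bigr => u _; rewrite addn0.
have f01 : f 0 = 1.
  move: fsum; under eq_bigr => u _ do rewrite fc.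
  rewrite sum_nat_const card_ord hcard => h.
  by apply/eqP; rewrite -(eqn_pmul2l q0) muln1 h.
rewrite -f01 -(fc s) /f; apply: eq_card => b; rewrite !inE modn_small //.
Qed.
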